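(* Let $\mathit{TS}_1=(\mathcal{S}_1,\mathcal{E}_1,\mathcal{I}_1,\to_1)$, $\mathit{TS}_2=(\mathcal{S}_2,\mathcal{E}_2,\mathcal{I}_2,\to_2)$ be LTSs and let $\psi\subseteq\mathcal{E}_1^\omega\times\mathcal{E}_2^\omega$ be a safety relation. If $(\mathcal{I}_1,\mathcal{I}_2,\psi)\in\texttt{fe}$, then for every $\tau_1\in\mathit{Traces}(\mathcal{I}_1)$ there exists $\tau_2\in\mathit{Traces}(\mathcal{I}_2)$ with $(\tau_1,\tau_2)\in\psi$.
   Context: LTS $(\mathcal{S},\mathcal{E},\mathcal{I},\to)$: states, observable events, initial state, and $\to\subseteq\mathcal{S}\times(\mathcal{E}\cup\{\emptyset\})\times\mathcal{S}$, label $\emptyset$ marking silent steps. $\to^*$ is the reflexive transitive closure of silent steps; for $e\in\mathcal{E}$, $s\overset{e}{\rightsquigarrow}s'$ means $s\to^*s''\xrightarrow{e}s'$ for some $s''$. $\mathit{Traces}(s)$ is the set of $\tau\in\mathcal{E}^\omega$ such that some $\pi\in\mathcal{S}^\omega$ has $\pi_0=s$ and $\pi_i\overset{\tau[i]}{\rightsquigarrow}\pi_{i+1}$ for all $i$. Safety closure $|\psi|_{\mathit{safe}}=\{(\tau_1,\tau_2)\mid\forall n.\exists\tau_1',\tau_2'.(\tau_1[0..n)\tau_1',\tau_2[0..n)\tau_2')\in\psi\}$ ($\tau[0..n)$ = prefix of length $n$); $\psi$ is a safety relation iff $|\psi|_{\mathit{safe}}\subseteq\psi$. Derivative $\Delta_{e_1,e_2}(\psi)=\{(\tau_1,\tau_2)\mid(e_1\tau_1,e_2\tau_2)\in\psi\}$.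 For $R\subseteq\mathcal{S}_1\times\mathcal{S}_2\times\mathcal{P}(\mathcal{E}_1^\omega\times\mathcal{E}_2^\omega)$: $\texttt{feF}(R)=\{(s_1,s_2,\psi)\mid\forall e_1,s_1'.\ s_1\overset{e_1}{\rightsquigarrow}_1s_1'\Rightarrow\exists e_2,s_2'.\ s_2\overset{e_2}{\rightsquigarrow}_2s_2'\wedge\Delta_{e_1,e_2}(\psi)\neq\emptyset\wedge(s_1',s_2',\Delta_{e_1,e_2}(\psi))\in R\}$, a monotone operator; $\texttt{fe}$ is its greatest fixed point. *)

(* Defs.v *)
From Stdlib Require Import Arith.

Set Implicit Arguments.

(* A labelled transition system (S, E, I, ->); the label None is the silent
   label (written ∅ in the paper), Some e an observable event e. *)
Record LTS := {
  St : Type;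
  Ev : Type;
  Init : St;
  step : St -> option Ev -> St -> Prop
}.

Inductive silent_star (T : LTS) : St T -> St T -> Prop :=
| ss_refl s : silent_star T s s
| ss_step s s' s'' : step T s None s' -> silent_star T s' s'' -> silent_star T s s''.

Definition weak_step (T : LTS) (s : St T) (e : Ev T) (s' : St T) : Prop :=
  exists s'', silent_star T s s'' /\ step T s'' (Some e) s'.

Definition word (E : Type) := nat -> E.

Definition Traces (T : LTS) (s : St T) : word (Ev T) -> Prop :=
  fun tau => exists pi : nat -> St T,
    pi 0 = s /\ forall i, weak_step T (pi i) (tau i) (pi (S i)).

Definition hyperrel (E1 E2 : Type) := word E1 -> word E2 -> Prop.

Definition prefix_app (E : Type) (n : nat) (tau tau' : word E) : word E :=
  fun i => if i <? n then tau i else tau' (i - n).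

Definition safe_closure (E1 E2 : Type) (psi : hyperrel E1 E2) : hyperrel E1 E2 :=
  fun t1 t2 => forall n, exists t1' t2',
    psi (prefix_app n t1 t1') (prefix_app n t2 t2').

Definition safety (E1 E2 : Type) (psi : hyperrel E1 E2) : Prop :=
  forall t1 t2, safe_closure psi t1 t2 -> psi t1 t2.

Definition cons_word (E : Type) (e : E) (t : word E) : word E :=
  fun i => match i with 0 => e | S j => t j end.

Definition deriv (E1 E2 : Type) (e1 : E1) (e2 : E2) (psi : hyperrel E1 E2)
  : hyperrel E1 E2 :=
  fun t1 t2 => psi (cons_word e1 t1) (cons_word e2 t2).

Definition nonempty_rel (E1 E2 : Type) (psi : hyperrel E1 E2) : Prop :=
  exists t1 t2, psi t1 t2.

Definition frel (T1 T2 : LTS) := St T1 -> St T2 -> hyperrel (Ev T1) (Ev T2) -> Prop.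

Definition feF (T1 T2 : LTS) (R : frel T1 T2) : frel T1 T2 :=
  fun s1 s2 psi => forall e1 s1', weak_step T1 s1 e1 s1' ->
    exists e2 s2', weak_step T2 s2 e2 s2' /\
      nonempty_rel (deriv e1 e2 psi) /\ R s1' s2' (deriv e1 e2 psi).

(* fe = greatest fixed point of feF (Knaster–Tarski: union of all
   post-fixed points R ⊆ feF R) *)
Definition fe (T1 T2 : LTS) : frel T1 T2 :=
  fun s1 s2 psi => exists R : frel T1 T2,
    (forall a b p, R a b p -> feF R a b p) /\ R s1 s2 psi.

(* Main.v *)
Require Import Defs.
From Stdlib Require Import Arith Lia ClassicalEpsilon FunctionalExtensionality.

Lemma prefix_cons (E : Type) (n : nat) (tau t : word E) :
  prefix_app n tau (cons_word (tau n) t) = prefix_app (S n) tau t.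
Proof.
  apply functional_extensionality; intro i; unfold prefix_app, cons_word.
  destruct (Nat.ltb_spec i n), (Nat.ltb_spec i (S n)); try lia; auto.
  - assert (i = n) by lia; subst. rewrite Nat.sub_diag. reflexivity.
  - destruct (i - n) eqn:E1; [lia|]. f_equal; lia.
Qed.

Lemma prefix0 (E : Type) (tau t : word E) : prefix_app 0 tau t = t.
Proof.
  apply functional_extensionality; intro i; unfold prefix_app. simpl.
  rewrite Nat.sub_0_r. reflexivity.
Qed.

Theorem mainTheorem5 (T1 T2 : LTS) (psi : hyperrel (Ev T1) (Ev T2)) :
  safety psi ->
  fe T1 T2 (Init T1) (Init T2) psi ->
  forall tau1, Traces T1 (Init T1) tau1 ->
  exists tau2, Traces T2 (Init T2) tau2 /\ psi tau1 tau2.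
Proof.
  intros Hsafe [R [Hpost HR]] tau1 [pi1 [H0 Hpi1]].
  assert (stepf : forall n (p : St T2 * hyperrel (Ev T1) (Ev T2)),
     R (pi1 n) (fst p) (snd p) ->
     {q : Ev T2 * St T2 | weak_step T2 (fst p) (fst q) (snd q) /\
        nonempty_rel (deriv (tau1 n) (fst q) (snd p)) /\
        R (pi1 (S n)) (snd q) (deriv (tau1 n) (fst q) (snd p))}).
  { intros n p Hp. apply constructive_indefinite_description.
    destruct (Hpost _ _ _ Hp (tau1 n) (pi1 (S n)) (Hpi1 n)) as [e2 [s2' H]].
    exists (e2, s2'); exact H. }
  pose (build := fix build (n : nat) :
      {p : St T2 * hyperrel (Ev T1) (Ev T2) | R (pi1 n) (fst p) (snd p)} :=
    match n with
    | 0 => exist (fun p => R (pi1 0) (fst p) (snd p)) (Init T2, psi)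
             (eq_ind_r (fun s => R s (Init T2) psi) HR H0)
    | S m => let b := build m in
             let q := stepf m (proj1_sig b) (proj2_sig b) in
             exist (fun p => R (pi1 (S m)) (fst p) (snd p))
               (snd (proj1_sig q), deriv (tau1 m) (fst (proj1_sig q)) (snd (proj1_sig b)))
               (proj2 (proj2 (proj2_sig q)))
    end).
  pose (ev := fun n => fst (proj1_sig (stepf n (proj1_sig (build n)) (proj2_sig (build n))))).
  pose (st := fun n => fst (proj1_sig (build n))).
  pose (phi := fun n => snd (proj1_sig (build n))).
  assert (Hst : forall n, weak_step T2 (st n) (ev n) (st (S n))).
  { intro n. unfold st, ev. simpl.
    exact (proj1 (proj2_sig (stepf n (proj1_sig (build n)) (proj2_sig (build n))))). }
  assert (Hphi : forall n, phi (S n) = deriv (tau1 n) (ev n) (phi n)).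
  { intro n. reflexivity. }
  assert (Hne : forall n, nonempty_rel (phi (S n))).
  { intro n. rewrite Hphi. unfold ev.
    exact (proj1 (proj2 (proj2_sig (stepf n (proj1_sig (build n)) (proj2_sig (build n)))))). }
  assert (Hinv : forall n t1 t2, phi n t1 t2 ->
            psi (prefix_app n tau1 t1) (prefix_app n ev t2)).
  { induction n; intros t1 t2 Ht.
    - rewrite !prefix0. exact Ht.
    - rewrite Hphi in Ht. unfold deriv in Ht. apply IHn in Ht.
      rewrite !prefix_cons in Ht. exact Ht. }
  exists ev. split.
  - exists st. split; [reflexivity | exact Hst].
  - apply Hsafe. intro n. destruct (Hne n) as [t1 [t2 Ht]].
    rewrite Hphi in Ht. unfold deriv in Ht. apply Hinv in Ht.
    eauto.
Qed.
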